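(* The Hilbert series $\sum_{n\ge0}(\dim_k (A_k)_n)t^n$ of $A_k$ equals $(1-7t+7t^2-t^3)^{-1}$.
   Context: Let $k$ be a field. Label the points of the Fano plane by $1,\dots,7$ so that its directed lines are $123,145,167,246,275,374,365$. For $i,j,l\in\{1,\dots,7\}$ put $\varepsilon^{ijl}=1$ if $(i,j,l)$ is a cyclic rotation of one of these directed lines, $\varepsilon^{ijl}=-1$ if $(j,i,l)$ is such a cyclic rotation, and $\varepsilon^{ijl}=0$ otherwise. Let $A_k=k\langle x_1,\dots,x_7\rangle/(r_1,\dots,r_7)$, graded by $\deg x_i=1$, where $r_i=\sum_{m,n=1}^7\varepsilon^{imn}x_mx_n$; explicitly $r_1=[x_2,x_3]+[x_4,x_5]+[x_6,x_7]$, $r_2=[x_3,x_1]+[x_4,x_6]+[x_7,x_5]$, $r_3=[x_1,x_2]+[x_6,x_5]+[x_7,x_4]$, $r_4=[x_5,x_1]+[x_3,x_7]+[x_6,x_2]$, $r_5=[x_1,x_4]+[x_2,x_7]+[x_3,x_6]$, $r_6=[x_7,x_1]+[x_5,x_3]+[x_2,x_4]$, $r_7=[x_1,x_6]+[x_4,x_3]+[x_5,x_2]$. *)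

(* Defs.v *)
From HB Require Import structures.
From mathcomp Require Import all_boot all_order all_algebra.
Set Implicit Arguments. Unset Strict Implicit. Unset Printing Implicit Defensive.
Import Order.TTheory GRing.Theory Num.Theory.
Local Open Scope ring_scope.

(* Points of the Fano plane 1..7 are encoded as 'I_7 via i |-> i-1.
   Directed lines 123,145,167,246,275,374,365 (1-based). *)
Definition fano_lines : seq (nat * nat * nat) :=
  [:: (1,2,3); (1,4,5); (1,6,7); (2,4,6); (2,7,5); (3,7,4); (3,6,5)]%N.

Definition cyc_line (a b c : nat) : bool :=
  has (fun t => let: (x, y, z) := t in
        [|| (a, b, c) == (x, y, z), (a, b, c) == (y, z, x) | (a, b, c) == (z, x, y)])
      fano_lines.

Definition eps (i j l : 'I_7) : int :=
  if cyc_line i.+1 j.+1 l.+1 then 1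
  else if cyc_line j.+1 i.+1 l.+1 then -1 else 0.

(* Degree-n component of the free algebra k<x_1..x_7>: the k-vector space with
   basis the words of length n in the letters 'I_7 (x_{i+1} <-> i). *)
Definition Fdeg (k : fieldType) (n : nat) := {ffun n.-tuple 'I_7 -> k^o}.

(* The homogeneous element  u * r_i * v  of the free algebra, for words u, v,
   seen in degree n (it is 0 unless size u + 2 + size v = n). *)
Definition relvec (k : fieldType) (n : nat) (i : 'I_7) (u v : seq 'I_7) : Fdeg k n :=
  [ffun w : n.-tuple 'I_7 =>
     \sum_(m < 7) \sum_(l < 7)
        (eps i m l)%:~R * ((val w == u ++ [:: m; l] ++ v)%:R : k)].

(* Degree-n component of the two-sided ideal (r_1,...,r_7): since the r_i are
   homogeneous of degree 2, it is spanned by the u r_i v with words u, v. *)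
Definition ideal_deg (k : fieldType) (n : nat) : {vspace Fdeg k n} :=
  (\sum_(i : 'I_7) \sum_(p < n.+1) \sum_(u : p.-tuple 'I_7)
     \sum_(q < n.+1) \sum_(v : q.-tuple 'I_7) <[relvec k n i u v]>)%VS.

Definition hilb (k : fieldType) (n : nat) : nat :=
  (\dim (fullv : {vspace Fdeg k n}) - \dim (ideal_deg k n))%N.

Definition denom_coef (i : nat) : int := nth 0 [:: 1; -7; 7; -1] i.

(* Main.v *)
Require Import Defs.
From HB Require Import structures.
From mathcomp Require Import all_boot all_order all_algebra.
From mathcomp Require Import zify.
Import GRing.Theory.
Local Open Scope ring_scope.

Set Implicit Arguments.


Definition epsn (i j l : nat) : int :=
  if cyc_line i.+1 j.+1 l.+1 then 1
  else if cyc_line j.+1 i.+1 l.+1 then -1 else 0.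
Lemma epsE (i j l : 'I_7) : eps i j l = epsn i j l. Proof. by []. Qed.

Definition leadn : seq (nat*nat) := [:: (6,5); (6,4); (6,3); (6,2); (6,1); (6,0); (5,0)]%N.
Definition l1n (i : nat) : nat := (nth (0,0) leadn i).1.
Definition l2n (i : nat) : nat := (nth (0,0) leadn i).2.
Definition forbn (x y : nat) : bool := ((x == 6) && (y != 6)) || ((x == 5) && (y == 0)).
Definition ridxn (x y : nat) : nat := find (fun i => (l1n i == x) && (l2n i == y)) (iota 0 7).

Lemma l1n_lt i : (l1n i < 7)%N.
Proof. by do 7! case: i => [//|i]; rewrite /l1n /= nth_nil. Qed.
Lemma l2n_lt i : (l2n i < 7)%N.
Proof. by do 7! case: i => [//|i]; rewrite /l2n /= nth_nil. Qed.

Definition lead1 (i : 'I_7) : 'I_7 := inord (l1n i).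
Definition lead2 (i : 'I_7) : 'I_7 := inord (l2n i).
Lemma lead1E i : (lead1 i : nat) = l1n i. Proof. by rewrite inordK ?l1n_lt. Qed.
Lemma lead2E i : (lead2 i : nat) = l2n i. Proof. by rewrite inordK ?l2n_lt. Qed.

Lemma all7 (P : nat -> bool) : all P (iota 0 7) -> forall i : 'I_7, P i.
Proof. by move=> /allP H i; apply: H; rewrite mem_iota ltn_ord. Qed.
Lemma all77 (P : nat -> nat -> bool) :
  all (fun a => all (P a) (iota 0 7)) (iota 0 7) -> forall i j : 'I_7, P i j.
Proof. move=> H i j; move: (all7 (fun a => all (P a) (iota 0 7)) H i) => /allP; apply; by rewrite mem_iota ltn_ord. Qed.
Lemma all777 (P : nat -> nat -> nat -> bool) :
  all (fun a => all (fun b => all (P a b) (iota 0 7)) (iota 0 7)) (iota 0 7) ->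
  forall i j l : 'I_7, P i j l.
Proof. move=> H i j l; move: (all77 (fun a b => all (P a b) (iota 0 7)) H i j) => /allP; apply; by rewrite mem_iota ltn_ord. Qed.

Lemma eps_cyc (i m l : 'I_7) : eps l i m = eps i m l.
Proof. rewrite !epsE; apply/eqP; move: i m l; apply: (all777 (fun i m l => epsn l i m == epsn i m l)); by vm_compute. Qed.
Lemma eps_lead (i : 'I_7) : eps i (lead1 i) (lead2 i) * eps i (lead1 i) (lead2 i) = 1.
Proof. rewrite epsE lead1E lead2E; apply/eqP; move: i; apply: (all7 (fun i => epsn i (l1n i) (l2n i) * epsn i (l1n i) (l2n i) == 1)); by vm_compute. Qed.
Lemma eps_low (i m l : 'I_7) : eps i m l != 0 ->
  ((m == lead1 i) && (l == lead2 i)) || (7 * m + l < 7 * lead1 i + lead2 i)%N.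
Proof.
rewrite epsE -!(inj_eq val_inj) /= lead1E lead2E; apply/implyP; move: i m l.
apply: (all777 (fun i m l => (epsn i m l != 0) ==> ((m == l1n i) && (l == l2n i)) || (7 * m + l < 7 * l1n i + l2n i)%N)); by vm_compute. Qed.
Lemma lead_overlap (i j : 'I_7) : lead2 j = lead1 i -> (j = 0 :> nat /\ i = 6 :> nat)%N.
Proof.
move=> E; have E' : l2n j == l1n i by rewrite -lead1E -lead2E E.
have H := all77 (fun i j => (l2n j == l1n i) ==> (j == 0%N) && (i == 6%N)) (ltac:(by vm_compute)) i j.
by move: H; rewrite E' /= => /andP[/eqP -> /eqP ->].
Qed.
Lemma overlap_codes (i : 'I_7) : (i != 0%N :> nat -> 49 * l1n i + 7 * l2n i + i < 329)%N /\ (i != 6%N :> nat -> 49 * i + 7 * l1n i + l2n i < 329)%N.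
Proof. split; apply/implyP; [move: i; apply: (all7 (fun i => (i != 0%N) ==> (49 * l1n i + 7 * l2n i + i < 329)%N))|move: i; apply: (all7 (fun i => (i != 6%N) ==> (49 * i + 7 * l1n i + l2n i < 329)%N))]; by vm_compute. Qed.
Lemma ridx_lead (x y : 'I_7) : forbn x y -> (l1n (ridxn x y) == x) && (l2n (ridxn x y) == y) && (ridxn x y < 7)%N.
Proof. apply/implyP; move: x y; apply: (all77 (fun x y => forbn x y ==> (l1n (ridxn x y) == x) && (l2n (ridxn x y) == y) && (ridxn x y < 7)%N)); by vm_compute. Qed.
Lemma lead_ridx (i : 'I_7) : forbn (l1n i) (l2n i) && (ridxn (l1n i) (l2n i) == i).
Proof. move: i; apply: (all7 (fun i => forbn (l1n i) (l2n i) && (ridxn (l1n i) (l2n i) == i))); by vm_compute. Qed.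


Definition word := seq 'I_7.
Fixpoint ldec (w : word) : option (word * 'I_7 * word) :=
  if w is x :: w' then
    if w' is y :: v then
      if forbn x y then Some ([::], inord (ridxn x y), v)
      else omap (fun p => (x :: p.1.1, p.1.2, p.2)) (ldec w')
    else None
  else None.

Lemma ldec_cons2 x y w : ldec (x :: y :: w) =
  if forbn x y then Some ([::], inord (ridxn x y), w)
  else omap (fun p => (x :: p.1.1, p.1.2, p.2)) (ldec (y :: w)).
Proof. by []. Qed.

Lemma ldecP w u i v : ldec w = Some (u, i, v) -> w = u ++ lead1 i :: lead2 i :: v.
Proof.
elim: w u i v => [//|x [//|y w] IH] u i v; rewrite ldec_cons2.
case: ifP => F.
  case=> <- <- <- /=; have /andP[/andP[/eqP h1 /eqP h2] h3] := ridx_lead x y F.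
  by congr (_ :: _ :: _); apply/val_inj; rewrite /= ?lead1E ?lead2E inordK.
case E: (ldec (y :: w)) => [[[u' i'] v']|] //= [<- <- <-].
by rewrite (IH _ _ _ E).
Qed.

Lemma ldec_first u i v : ldec (rcons u (lead1 i)) = None ->
  ldec (u ++ lead1 i :: lead2 i :: v) = Some (u, i, v).
Proof.
elim: u => [|x u IH].
  move=> _; rewrite cat0s ldec_cons2 !(lead1E, lead2E).
  have /andP[-> /eqP ->] := lead_ridx i.
  by rewrite inord_val.
rewrite rcons_cons cat_cons.
case: u IH => [|y u] IH.
  have IH' : ldec [:: lead1 i, lead2 i & v] = Some ([::], i, v) by exact: IH.
  change (ldec [:: x; lead1 i] = None -> ldec [:: x, lead1 i, lead2 i & v] = Some ([:: x], i, v)).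
  by rewrite [ldec [:: x, _, _ & _]]ldec_cons2 IH' [ldec [:: x; _]]ldec_cons2; case: ifP.
rewrite rcons_cons cat_cons !ldec_cons2; case: ifP => // _.
rewrite -cat_cons -rcons_cons.
by case E: (ldec (rcons (y :: u) (lead1 i))) => [a|] //; rewrite (IH E).
Qed.

Definition code (w : word) : nat := foldl (fun acc (x : 'I_7) => acc * 7 + x)%N 0%N w.
Lemma foldl_code a w : foldl (fun acc (x : 'I_7) => acc * 7 + x)%N a w = (a * 7 ^ size w + code w)%N.
Proof.
rewrite /code; elim: w a => [|x w IH] a /=; first by rewrite muln1 addn0.
rewrite IH [in RHS]IH expnS; lia.
Qed.
Lemma code_cat u v : code (u ++ v) = (code u * 7 ^ size v + code v)%N.
Proof. by rewrite {1}/code foldl_cat foldl_code. Qed.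
Lemma code_lt u v s1 s2 : size s1 = size s2 -> (code s1 < code s2)%N ->
  (code (u ++ s1 ++ v) < code (u ++ s2 ++ v))%N.
Proof.
move=> Hs Hc; rewrite !code_cat !size_cat Hs ltn_add2l ltn_add2r ltn_pmul2r //.
by rewrite expn_gt0.
Qed.
Lemma code2 (a b : 'I_7) : code [:: a; b] = (7 * a + b)%N.
Proof. rewrite /code /=; lia. Qed.
Lemma code3 (a b c : 'I_7) : code [:: a; b; c] = (49 * a + 7 * b + c)%N.
Proof. rewrite /code /=; lia. Qed.


Definition ew (k : fieldType) n (w : word) : Fdeg k n :=
  [ffun t : n.-tuple 'I_7 => ((val t == w)%:R : k)].

Lemma relvecE k n i u v : relvec k n i u v =
  \sum_(m < 7) \sum_(l < 7) (eps i m l)%:~R *: ew k n (u ++ [:: m; l] ++ v).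
Proof.
apply/ffunP => t; rewrite !ffunE sum_ffunE; apply: eq_bigr => m _.
rewrite sum_ffunE; apply: eq_bigr => l _; by rewrite !ffunE.
Qed.

Lemma ew0 k n w : size w != n -> ew k n w = 0.
Proof.
move=> Hw; apply/ffunP => t; rewrite !ffunE; case: eqP => // Et.
by move: Hw; rewrite -Et size_tuple eqxx.
Qed.

Lemma relvec0 k n i u v : size (u ++ lead1 i :: lead2 i :: v) != n -> relvec k n i u v = 0.
Proof.
move=> Hs; rewrite relvecE big1 // => m _; rewrite big1 // => l _.
by rewrite ew0 ?scaler0 //; move: Hs; rewrite !size_cat.
Qed.

Lemma sum2_mem (k : fieldType) (V : vectType k) (U : {vspace V}) (T : 'I_7 -> 'I_7 -> V) c d :
  \sum_m \sum_l T m l \in U -> (forall m l, (m != c) || (l != d) -> T m l \in U) -> T c d \in U.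
Proof.
move=> Hs Ho; rewrite (bigD1 c) //= (bigD1 d) //= in Hs.
have H1 : \sum_(l | l != d) T c l \in U by apply: memv_suml => l /= Hl; apply: Ho; rewrite Hl orbT.
have H2 : \sum_(m | m != c) \sum_l T m l \in U.
  by apply: memv_suml => m Hm; apply: memv_suml => l _; apply: Ho; rewrite Hm.
have := rpredB Hs (rpredD H1 H2); by rewrite -addrA addrK.
Qed.

Lemma disj_id k n u' v0 v (i j : 'I_7) :
 \sum_m \sum_l (eps j m l)%:~R *: relvec k n i (u' ++ [:: m; l] ++ v0) v =
 \sum_p \sum_q (eps i p q)%:~R *: relvec k n j u' (v0 ++ [:: p; q] ++ v).
Proof.
transitivity (\sum_m \sum_l \sum_p \sum_q ((eps j m l)%:~R * (eps i p q)%:~R) *: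
   ew k n (u' ++ [:: m; l] ++ v0 ++ [:: p; q] ++ v)).
  apply: eq_bigr => m _; apply: eq_bigr => l _; rewrite relvecE scaler_sumr.
  apply: eq_bigr => p _; rewrite scaler_sumr; apply: eq_bigr => q _.
  by rewrite scalerA -!catA.
under eq_bigr => m _ do (rewrite exchange_big; under eq_bigr => p _ do rewrite exchange_big).
rewrite exchange_big; apply: eq_bigr => p _; rewrite exchange_big; apply: eq_bigr => q _.
rewrite relvecE scaler_sumr; apply: eq_bigr => m _; rewrite scaler_sumr.
apply: eq_bigr => l _; rewrite scalerA mulrC; congr (_ *: ew _ _ _).
Qed.

Lemma ovl_id k n u' v : \sum_i relvec k n i (u' ++ [:: i]) v = \sum_i relvec k n i u' (i :: v).
Proof.
transitivity (\sum_(a < 7) \sum_(b < 7) \sum_(c < 7) (eps a b c)%:~R *: ew k n (u' ++ [:: a; b; c] ++ v)).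
  apply: eq_bigr => a _; rewrite relvecE; apply: eq_bigr => b _; apply: eq_bigr => c _.
  by rewrite -catA.
symmetry; under eq_bigr => i _ do rewrite relvecE.
rewrite exchange_big; apply: eq_bigr => m _; rewrite exchange_big.
apply: eq_bigr => l _; apply: eq_bigr => i _.
by rewrite (eps_cyc m l i).
Qed.

Unset Implicit Arguments.


Definition gvec k n (t : n.-tuple 'I_7) : Fdeg k n :=
  if ldec t is Some (u, i, v) then relvec k n i u v else 0.
Definition Gsp k n : {vspace Fdeg k n} := (\sum_(t : n.-tuple 'I_7) <[gvec k n t]>)%VS.

Lemma memG k n u i v : size (u ++ lead1 i :: lead2 i :: v) = n ->
  ldec (rcons u (lead1 i)) = None -> relvec k n i u v \in Gsp k n.
Proof.
move=> /eqP Hs Hl; pose t := Tuple Hs.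
have Ht : gvec k n t = relvec k n i u v by rewrite /gvec /= ldec_first.
rewrite memvE; apply: (sumv_sup t) => //; by rewrite -memvE Ht memv_line.
Qed.

Lemma memI k n u i v : size (u ++ lead1 i :: lead2 i :: v) = n ->
  relvec k n i u v \in ideal_deg k n.
Proof.
move=> Hs.
have Hp : (size u < n.+1)%N by rewrite -Hs size_cat /=; lia.
have Hq : (size v < n.+1)%N by rewrite -Hs size_cat /=; lia.
rewrite memvE; apply: (sumv_sup i) => //; apply: (sumv_sup (Ordinal Hp)) => //.
apply: (sumv_sup (in_tuple u)) => //; apply: (sumv_sup (Ordinal Hq)) => //.
apply: (sumv_sup (in_tuple v)) => //; by rewrite -memvE memv_line.
Qed.

Lemma eps_sq (k : fieldType) (i : 'I_7) : (eps i (lead1 i) (lead2 i))%:~R * (eps i (lead1 i) (lead2 i))%:~R = 1 :> k.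
Proof. by rewrite -intrM eps_lead. Qed.

Lemma Gmain k n N : forall i u v, (code (u ++ lead1 i :: lead2 i :: v) < N)%N ->
  relvec k n i u v \in Gsp k n.
Proof.
elim: N => [//|N IHN].
suff H : forall s i u v, (size u < s)%N -> (code (u ++ lead1 i :: lead2 i :: v) <= N)%N ->
    relvec k n i u v \in Gsp k n.
  by move=> i u v; rewrite ltnS; apply: (H (size u).+1).
elim=> [//|s IHs] i u v; rewrite ltnS => Hs Hc.
have [Hn|Hn] := eqVneq (size (u ++ lead1 i :: lead2 i :: v)) n; last by rewrite relvec0 // mem0v.
case E: (ldec (rcons u (lead1 i))) => [[[u' j] v']|]; last exact: memG.
have Ed := @ldecP _ _ _ _ E.
have IHlt : forall i' u1 v1, (code (u1 ++ lead1 i' :: lead2 i' :: v1) <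
     code (u ++ lead1 i :: lead2 i :: v))%N -> relvec k n i' u1 v1 \in Gsp k n.
  by move=> i' u1 v1 H; apply: IHN; apply: leq_trans H Hc.
case/lastP: v' E Ed => [|v0 x] E Ed.
- have : rcons u (lead1 i) = rcons (rcons u' (lead1 j)) (lead2 j) by rewrite Ed -!cats1 -catA.
  move/rcons_inj => [Eu Ea].
  have [j0 i6] := lead_overlap _ _ (esym Ea).
  have Eic : i = lead1 j by apply: val_inj; rewrite /= lead1E j0 i6.
  have Eij : lead2 i = j by apply: val_inj; rewrite /= lead2E j0 i6.
  have Hw : u ++ [:: lead1 i, lead2 i & v] = u' ++ [:: i; lead1 i; lead2 i] ++ v.
    by rewrite Eu -cats1 -catA -Eic.
  have Hcw : code (u ++ [:: lead1 i, lead2 i & v]) = (code u' * 7 ^ (3 + size v) + 329 * 7 ^ size v + code v)%N.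
    rewrite Hw !code_cat code3 size_cat /= !lead1E !lead2E i6 expnD; change (l1n 6) with 5%N; change (l2n 6) with 0%N; lia.
  rewrite Eu -cats1 -Eic.
  have Hid := ovl_id k n u' v; rewrite (bigD1 i) //= in Hid.
  have -> : relvec k n i (u' ++ [:: i]) v = \sum_i' relvec k n i' u' (i' :: v)
     - \sum_(i' | i' != i) relvec k n i' (u' ++ [:: i']) v by rewrite -Hid addrK.
  apply: rpredB; apply: memv_suml => i' Hi'.
    have [Hi0|Hi0] := eqVneq (i' : nat) 0%N.
      have Ei' : i' = j by apply: val_inj; rewrite /= Hi0 j0.
      apply: IHs.
        by move: Hs; rewrite Eu size_rcons.
      have -> : u' ++ [:: lead1 i', lead2 i' & i' :: v] = u ++ [:: lead1 i, lead2 i & v].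
        by rewrite Hw Ei' -Ea Eij -Eic.
      exact: Hc.
    apply: IHlt; rewrite Hcw.
    have -> : u' ++ [:: lead1 i', lead2 i' & i' :: v] = u' ++ [:: lead1 i'; lead2 i'; i'] ++ v by [].
    rewrite !code_cat code3 size_cat /= !lead1E !lead2E expnD.
    have := (overlap_codes i').1 Hi0; have : (0 < 7 ^ size v)%N by rewrite expn_gt0.
    nia.
  have Hi6 : (i' : nat) != 6%N by apply: contraNneq Hi' => H; apply/eqP/val_inj; rewrite /= H i6.
  apply: IHlt; rewrite Hcw.
  have -> : (u' ++ [:: i']) ++ [:: lead1 i', lead2 i' & v] = u' ++ [:: i'; lead1 i'; lead2 i'] ++ v by rewrite -catA.
  rewrite !code_cat code3 size_cat /= !lead1E !lead2E expnD.
  have := (overlap_codes i').2 Hi6; have : (0 < 7 ^ size v)%N by rewrite expn_gt0.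
  nia.
- have : rcons u (lead1 i) = rcons (u' ++ [:: lead1 j, lead2 j & v0]) x by rewrite Ed rcons_cat.
  move/rcons_inj => [Eu _].
  suff: (eps j (lead1 j) (lead2 j))%:~R *: relvec k n i u v \in Gsp k n.
    by move/(memvZ (eps j (lead1 j) (lead2 j))%:~R); rewrite scalerA eps_sq scale1r.
  rewrite Eu.
  apply: (sum2_mem (fun m l => (eps j m l)%:~R *: relvec k n i (u' ++ [:: m; l] ++ v0) v)).
    rewrite disj_id; apply: memv_suml => p _; apply: memv_suml => q _.
    have [->|Hpq] := eqVneq (eps i p q) 0; first by rewrite scale0r mem0v.
    apply: memvZ; case/orP: (eps_low _ _ _ Hpq) => [/andP[/eqP Ep /eqP Eq] | Hlt].
      apply: IHs.
        by move: Hs; rewrite Eu size_cat /=; lia.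
      by move: Hc; rewrite Eu Ep Eq -catA.
    apply: IHlt; rewrite Eu.
    have -> : u' ++ [:: lead1 j, lead2 j & v0 ++ [:: p; q] ++ v] = (u' ++ [:: lead1 j, lead2 j & v0]) ++ [:: p; q] ++ v by rewrite -catA.
    have -> : (u' ++ [:: lead1 j, lead2 j & v0]) ++ [:: lead1 i, lead2 i & v] = (u' ++ [:: lead1 j, lead2 j & v0]) ++ [:: lead1 i; lead2 i] ++ v by [].
    by apply: code_lt; rewrite // !code2.
  move=> m l Hml.
  have [->|Hm] := eqVneq (eps j m l) 0; first by rewrite scale0r mem0v.
  apply: memvZ; case/orP: (eps_low _ _ _ Hm) => [/andP[/eqP Ep /eqP Eq] | Hlt].
    by move: Hml; rewrite Ep Eq !eqxx.
  apply: IHlt; rewrite Eu -!catA.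
  rewrite (_ : [:: lead1 j, lead2 j & v0] ++ _ = [:: lead1 j; lead2 j] ++ (v0 ++ [:: lead1 i, lead2 i & v])) //.
  by apply: code_lt; rewrite // !code2.
Qed.


Definition bvec k n (t : n.-tuple 'I_7) : Fdeg k n := if ldec t is None then ew k n t else 0.
Definition Bsp k n : {vspace Fdeg k n} := (\sum_(t : n.-tuple 'I_7) <[bvec k n t]>)%VS.

Lemma lowmain k n N : forall w, size w = n -> (code w < N)%N ->
  ew k n w \in (ideal_deg k n + Bsp k n)%VS.
Proof.
elim: N => [//|N IHN] w Hw; rewrite ltnS => Hc.
case E: (ldec w) => [[[u i] v]|]; last first.
  apply: (subvP (addvSr _ _)); move/eqP: Hw => Hw; pose t := Tuple Hw.
  have Ht : bvec k n t = ew k n w by rewrite /bvec /= E.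
  rewrite memvE; apply: (sumv_sup t) => //; by rewrite -memvE Ht memv_line.
have Ed := @ldecP _ _ _ _ E.
have HI : relvec k n i u v \in (ideal_deg k n + Bsp k n)%VS.
  by apply: (subvP (addvSl _ _)); apply: memI; rewrite -Ed.
rewrite relvecE in HI.
suff H : (eps i (lead1 i) (lead2 i))%:~R *: ew k n w \in (ideal_deg k n + Bsp k n)%VS.
  by move/(memvZ (eps i (lead1 i) (lead2 i))%:~R): H; rewrite scalerA eps_sq scale1r.
rewrite Ed; apply: (sum2_mem (fun m l => (eps i m l)%:~R *: ew k n (u ++ [:: m; l] ++ v)) (lead1 i) (lead2 i) HI) => m l Hml.
have [->|Hm] := eqVneq (eps i m l) 0; first by rewrite scale0r mem0v.
apply: memvZ; case/orP: (eps_low _ _ _ Hm) => [/andP[/eqP Ep /eqP Eq] | Hlt].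
  by move: Hml; rewrite Ep Eq !eqxx.
apply: IHN.
  by rewrite -Hw Ed !size_cat.
apply: leq_trans Hc; rewrite Ed.
by apply: (@code_lt u v [:: m; l] [:: lead1 i; lead2 i]); rewrite // !code2.
Qed.

Lemma full_decomp k n (f : Fdeg k n) : f = \sum_(t : n.-tuple 'I_7) f t *: ew k n t.
Proof.
apply/ffunP => t; rewrite sum_ffunE (bigD1 t) //= big1 => [|t' Ht'].
  by rewrite !ffunE eqxx addr0 [_ *: _]mulr1.
rewrite !ffunE; case: eqP => [/val_inj E|]; last by rewrite [_ *: _]mulr0.
by move: Ht'; rewrite E eqxx.
Qed.

Lemma dim_full k n : \dim (fullv : {vspace Fdeg k n}) = (7 ^ n)%N.
Proof. by rewrite dimvf /dim /= card_tuple card_ord muln1. Qed.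

Definition Nn n := #|[pred t : n.-tuple 'I_7 | ldec t == None]|.

Lemma dimI_le k n : (\dim (ideal_deg k n) <= #|[pred t : n.-tuple 'I_7 | ldec t != None]|)%N.
Proof.
have sIG : (ideal_deg k n <= Gsp k n)%VS.
  apply/subv_sumP => i _; apply/subv_sumP => p _; apply/subv_sumP => u _.
  apply/subv_sumP => q _; apply/subv_sumP => v _.
  rewrite -memvE; exact: (Gmain k n (code (u ++ lead1 i :: lead2 i :: v)).+1 i u v (ltnSn _)).
apply: leq_trans (dimvS sIG) _.
apply: leq_trans (dimv_leq_sum _ _ _) _.
rewrite -sum1_card [X in (_ <= X)%N]big_mkcond /=; apply: leq_sum => t _.
rewrite dim_vline /gvec inE; case: (ldec t) => [[[u i] v]|] /=; [by case: (_ != 0)| by rewrite eqxx].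
Qed.

Lemma dimI_ge k n : (7 ^ n <= \dim (ideal_deg k n) + Nn n)%N.
Proof.
have sFB : (fullv <= ideal_deg k n + Bsp k n)%VS.
  apply/subvP => f _; rewrite [f]full_decomp; apply: memv_suml => t _; apply: memvZ.
  exact: (lowmain k n (code t).+1 t (size_tuple t) (ltnSn _)).
rewrite -(dim_full k n); apply: leq_trans (dimvS sFB) _.
apply: leq_trans (dimv_add_leqif _ _).1 _; rewrite leq_add2l.
apply: leq_trans (dimv_leq_sum _ _ _) _.
rewrite /Nn -sum1_card [X in (_ <= X)%N]big_mkcond /=; apply: leq_sum => t _.
rewrite dim_vline /bvec inE; case: (ldec t) => [[[u i] v]|] /=; [by rewrite eqxx | by case: (_ != 0)].
Qed.

Lemma hilbE k n : hilb k n = Nn n.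
Proof.
have H1 := dimI_le k n; have H2 := dimI_ge k n.
have H3 : (Nn n + #|[pred t : n.-tuple 'I_7 | ldec t != None]| = 7 ^ n)%N.
  have E : #|{: n.-tuple 'I_7}| = (7 ^ n)%N by rewrite card_tuple card_ord.
  rewrite /Nn -E -(cardC [pred t : n.-tuple 'I_7 | ldec t == None]); congr (_ + _).
rewrite /hilb dim_full; lia.
Qed.

Local Close Scope ring_scope.


Definition cnt n (F : seq 'I_7 -> bool) : nat := \sum_(t : n.-tuple 'I_7) (F t : nat).

Lemma cntE n (F : seq 'I_7 -> bool) : #|[pred t : n.-tuple 'I_7 | F t]| = cnt n F.
Proof. rewrite -sum1_card big_mkcond /=; apply: eq_bigr => t _; by rewrite inE; case: (F t). Qed.

Lemma cntS n (F : seq 'I_7 -> bool) : cnt n.+1 F = \sum_(x : 'I_7) cnt n (fun s => F (x :: s)).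
Proof.
rewrite /cnt pair_big /=.
rewrite (reindex (fun p : 'I_7 * n.-tuple 'I_7 => cons_tuple p.1 p.2)) //=.
exists (fun t => (thead t, behead_tuple t)) => [[x t] _ | t _].
  by congr pair; apply: val_inj.
by rewrite [RHS]tuple_eta; apply: val_inj.
Qed.

Lemma cnt0 (F : seq 'I_7 -> bool) : cnt 0 F = F [::].
Proof. rewrite /cnt (big_pred1 [tuple]) // => t; apply/esym/eqP/tuple0. Qed.

Definition norm (w : seq 'I_7) := ldec w == None.
Lemma norm_cons2 x y w : norm (x :: y :: w) = ~~ forbn x y && norm (y :: w).
Proof. rewrite /norm ldec_cons2; case: ifP => // _; by case: (ldec (y :: w)). Qed.

Definition Hn m (a : nat) := cnt m (fun s => norm (inord a :: s)).

Lemma NnE n : Nn n = cnt n norm.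
Proof. exact: (cntE n norm). Qed.

Lemma HnE m (y : 'I_7) : cnt m (fun s => norm (y :: s)) = Hn m y.
Proof. by rewrite /Hn inord_val. Qed.

Lemma NnS m : Nn m.+1 = (Hn m 0 + Hn m 1 + Hn m 2 + Hn m 3 + Hn m 4 + Hn m 5 + Hn m 6)%N.
Proof.
by rewrite NnE cntS !big_ord_recr big_ord0 !HnE /=.
Qed.

Lemma HnS m a : (a < 7)%N -> Hn m.+1 a = \sum_(y < 7) (if forbn a y then 0 else Hn m y)%N.
Proof.
move=> Ha; rewrite /Hn cntS; apply: eq_bigr => y _.
rewrite /cnt; under eq_bigr => t _ do rewrite norm_cons2 inordK //.
case: (forbn a y) => /=; first by rewrite big1.
by rewrite inord_val.
Qed.

Lemma Hn0 a : Hn 0 a = 1%N.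
Proof. by rewrite /Hn cnt0. Qed.

Lemma Hn_gen m a : (a < 5)%N -> Hn m.+1 a = Nn m.+1.
Proof.
move=> Ha; rewrite HnS ?(ltn_trans Ha) // NnS !big_ord_recr big_ord0 /= /forbn.
move: Ha; case: a => [|[|[|[|[|a]]]]] //= _.
Qed.
Lemma Hn6 m : Hn m 6 = 1%N.
Proof.
elim: m => [|m IH]; first exact: Hn0.
by rewrite HnS // !big_ord_recr big_ord0 /= /forbn /= IH.
Qed.
Lemma Hn5 m : (Hn m.+1 5 + Hn m 0)%N = Nn m.+1.
Proof.
by rewrite HnS // NnS !big_ord_recr big_ord0 /= /forbn /=; lia.
Qed.
Lemma Nn0 : Nn 0 = 1%N.
Proof. by rewrite NnE cnt0. Qed.
Lemma Hn_0 m : Hn m 0 = Nn m.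
Proof. case: m => [|m]; [by rewrite Hn0 Nn0 | exact: Hn_gen]. Qed.
Lemma Nn1 : Nn 1 = 7%N.
Proof. by rewrite NnS !Hn0. Qed.
Lemma Nn_rec m : (Nn m.+2 + Nn m = 6 * Nn m.+1 + 1)%N.
Proof.
rewrite NnS !(Hn_gen m 0, Hn_gen m 1, Hn_gen m 2, Hn_gen m 3, Hn_gen m 4) // Hn6 -(Hn_0 m) -(Hn5 m); lia.
Qed.

Local Open Scope ring_scope.


Theorem proposition4p2 (k : fieldType) (n : nat) :
  \sum_(i < n.+1) denom_coef i * ((hilb k (n - i))%:Z) = ((n == 0)%N)%:Z.
Proof.
under eq_bigr => i _ do rewrite hilbE.
case: n => [|[|[|n]]].
- by rewrite big_ord_recl big_ord0 Nn0.
- by rewrite !big_ord_recl big_ord0 /= Nn1 Nn0.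
- rewrite !big_ord_recl big_ord0 /=.
  have := Nn_rec 0; rewrite Nn1 Nn0 => h.
  rewrite subn0 /denom_coef /bump /=; lia.
rewrite !big_ord_recl big1 => [|i _]; last first.
  by rewrite /denom_coef /bump /= nth_nil mul0r.
have h1 := Nn_rec n; have h2 := Nn_rec n.+1.
rewrite subn0 /denom_coef /bump /= !subSS !subn0.
lia.
Qed.
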